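(* Let $\mathcal A_+,\mathcal A_-\subseteq\mathbb R^n$ be disjoint finite sets with $\mathcal A=\mathcal A_+\cup\mathcal A_-$ full dimensional. Let $\Lambda=\{\Delta_1,\dots,\Delta_r\}$ be full-dimensional simplices with vertices in $\mathcal A_+$ such that $\mathcal A_-\subseteq\Delta_j$ for all $j\in[r]$, and let $\Gamma_j$ be the smallest face of $\Delta_j$ containing $\mathcal A_-$. Let $f\in\mathcal S(\mathcal A_+,\mathcal A_-)$ have nonsigned coefficients $c\in\mathbb R^{\mathcal A}_{>0}$ and suppose $\mathbb 1\in\operatorname{Sing}_{>0}(f)$. Let $\mathcal Z=\mathcal Z(\Lambda,c)$. Then: (i) $\mathcal Z\subseteq\{\delta\in\mathbb R^r:\sum_{i=1}^r\delta_i=1\}$. (ii) If $\delta\in\mathcal Z\cap\mathbb R^r_{\ge0}$ and $J=\{j\in[r]:\delta_j>0\}$, then for each $j\in J$ the signomial $$q_j=\sum_{a\in\operatorname{vertices}(\Gamma_j)}\delta_j\Big(\sum_{b\in\mathcal A_-}\lambda^b_{a,j}c_b\Big)x^a-\sum_{b\in\mathcal A_-}\delta_jc_bx^b$$ has signed support $(\operatorname{vertices}(\Gamma_j),\mathcal A_-)$, which is an extended circuit, and satisfies $\mathbb 1\in\operatorname{Sing}_{>0}(q_j)$; moreover $f=\sum_{j\in J}q_j$, and $f$ is SONC.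
   Context: A signomial with signed support $(\mathcal A_+,\mathcal A_-)$ is $f(x)=\sum_{a\in\mathcal A_+}c_ax^a-\sum_{b\in\mathcal A_-}c_bx^b$ on $\mathbb R^n_{>0}$ with all $c_a,c_b>0$ (nonsigned coefficients); $\mathcal S(\mathcal A_+,\mathcal A_-)$ is the set of these. Full dimensional: $\dim\operatorname{conv}(\mathcal A)=n$. $\operatorname{Sing}_{>0}(f)$ is the set of $x\in\mathbb R^n_{>0}$ with $f(x)=x_1\partial_{x_1}f(x)=\dots=x_n\partial_{x_n}f(x)=0$; $\mathbb 1=(1,\dots,1)$. $\lambda^b_{a,k}\in[0,1]$ ($a\in\operatorname{vertices}(\Delta_k)$) are the barycentric coordinates of $b$ w.r.t. the vertices of $\Delta_k$, i.e. $b=\sum_a\lambda^b_{a,k}a$, $\sum_a\lambda^b_{a,k}=1$. $\mathcal Z(\Lambda,c)\subseteq\mathbb R^r$ is the solution set of the linear system in $\delta_1,\dots,\delta_r$: $c_a=\sum_{k:\,a\in\operatorname{vertices}(\Delta_k)}\delta_k\big(\sum_{b\in\mathcal A_-}\lambda^b_{a,k}c_b\big)$ for all $a\in\mathcal A_+$. $(\mathcal B_+,\mathcal B_-)$ is an extended circuit if $\#(\mathcal B_+\cup\mathcal B_-)=\#\mathcal B_+=1$ or $\operatorname{conv}(\mathcal B_+\cup\mathcal B_-)$ is a simplex with vertex set $\mathcal B_+$; a circuit if moreover (in the second case) $\#\mathcal B_-=1$ and $\mathcal B_-\subseteq\operatorname{relint}\operatorname{conv}(\mathcal B_+)$. A signomial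 is SONC if it is a finite sum of copositive signomials whose signed supports are circuits. *)

(* Defs.v *)
From HB Require Import structures.
From mathcomp Require Import all_boot all_order all_algebra.
From mathcomp Require Import all_classical all_reals all_analysis.
Set Implicit Arguments. Unset Strict Implicit. Unset Printing Implicit Defensive.
Import Order.TTheory GRing.Theory Num.Theory.
Import numFieldNormedType.Exports.
Local Open Scope classical_set_scope.
Local Open Scope ring_scope.

Section Signomials.
Variables (R : realType) (n : nat).
Local Notation vec := 'rV[R]_n.

Definition dotv (w y : vec) : R := \sum_(i < n) w 0 i * y 0 i.

Definition mono (x a : vec) : R := \prod_(i < n) (x 0 i) `^ (a 0 i).

Definition posv (x : vec) : Prop := forall i, 0 < x 0 i.

Definition onev : vec := const_mx 1.

Definition signomial := seq (R * vec).
Definition coef (g : signomial) (a : vec) : R :=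
  \sum_(t <- g) (if t.2 == a then t.1 else 0).
Definition seval (g : signomial) (x : vec) : R :=
  \sum_(t <- g) t.1 * mono x t.2.
Definition pos_supp (g : signomial) : set vec := [set a | 0 < coef g a].
Definition neg_supp (g : signomial) : set vec := [set a | coef g a < 0].

Definition sig_of (Ap Am : seq vec) (c : vec -> R) : signomial :=
  [seq (c a, a) | a <- Ap] ++ [seq (- c b, b) | b <- Am].

Definition Sing_pos (g : signomial) (x : vec) : Prop :=
  posv x /\ seval g x = 0 /\
  forall i : 'I_n, x 0 i * derive (seval g) x (delta_mx 0 i) = 0.

Definition copositive (g : signomial) : Prop :=
  forall x, posv x -> 0 <= seval g x.

Definition cvxhull (S : set vec) : set vec :=
  [set x | exists (s : seq vec) (mu : vec -> R),
     (forall a, a \in s -> S a) /\ (forall a, a \in s -> 0 <= mu a) /\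
     \sum_(a <- s) mu a = 1 /\ \sum_(a <- s) mu a *: a = x].
Definition affhull (S : set vec) : set vec :=
  [set x | exists (s : seq vec) (mu : vec -> R),
     (forall a, a \in s -> S a) /\
     \sum_(a <- s) mu a = 1 /\ \sum_(a <- s) mu a *: a = x].

Definition aff_indep (V : seq vec) : Prop :=
  uniq V /\ forall mu : vec -> R,
    \sum_(a <- V) mu a = 0 -> \sum_(a <- V) mu a *: a = 0 ->
    forall a, a \in V -> mu a = 0.

Definition relint (C : set vec) : set vec :=
  [set x | C x /\ exists e : R, 0 < e /\
     forall y, affhull C y -> `|y - x| < e -> C y].

(* faces of a set P (exposed by a valid linear inequality; includes P, empty) *)
Definition is_face (P F : set vec) : Prop :=
  exists (w : vec) (t : R), (forall y, P y -> dotv w y <= t) /\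
    F = P `&` [set y | dotv w y = t].

Definition smallest_face (P S : set vec) : set vec :=
  [set x | forall F, is_face P F -> S `<=` F -> F x].

Definition is_vertex (C : set vec) (v : vec) : Prop :=
  C v /\ forall y z (t : R), C y -> C z -> 0 < t < 1 ->
    v = t *: y + (1 - t) *: z -> y = z.
Definition vertices (C : set vec) : set vec := [set v | is_vertex C v].

Definition is_simplex (P : set vec) : Prop :=
  exists V : seq vec, aff_indep V /\ P = cvxhull [set a | a \in V].

Definition one_point_case (Bp Bm : set vec) : Prop :=
  exists v, Bp `|` Bm = [set v] /\ Bp = [set v].
Definition simplex_case (Bp Bm : set vec) : Prop :=
  is_simplex (cvxhull (Bp `|` Bm)) /\ vertices (cvxhull (Bp `|` Bm)) = Bp.
Definition ext_circuit (Bp Bm : set vec) : Prop :=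
  one_point_case Bp Bm \/ simplex_case Bp Bm.
Definition circuit (Bp Bm : set vec) : Prop :=
  one_point_case Bp Bm \/
  (simplex_case Bp Bm /\ (exists b, Bm = [set b]) /\ Bm `<=` relint (cvxhull Bp)).

Definition SONC (f : signomial) : Prop :=
  exists gs : seq signomial,
    (forall g, g \in gs -> copositive g /\ circuit (pos_supp g) (neg_supp g)) /\
    forall a, coef f a = \sum_(g <- gs) coef g a.

Definition is_bary (V : seq vec) (b : vec) (mu : vec -> R) : Prop :=
  \sum_(a <- V) mu a = 1 /\ \sum_(a <- V) mu a *: a = b.

Definition Zset (r : nat) (Ap Am : seq vec) (V : 'I_r -> seq vec)
  (lam : 'I_r -> vec -> vec -> R) (c : vec -> R) : set ('I_r -> R) :=
  [set delta | forall a, a \in Ap ->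
     c a = \sum_(k < r | a \in V k) delta k * (\sum_(b <- Am) lam k b a * c b)].

Definition Gam (Vj Am : seq vec) : set vec :=
  smallest_face (cvxhull [set a | a \in Vj]) [set b | b \in Am].

Definition qsig (Vj Am : seq vec) (lamj : vec -> vec -> R) (c : vec -> R)
  (dj : R) : signomial :=
  [seq (dj * (\sum_(b <- Am) lamj b a * c b), a)
     | a <- Vj & `[< is_vertex (Gam Vj Am) a >]] ++
  [seq (- (dj * c b), b) | b <- Am].

End Signomials.

(* Main.v *)
Require Import Defs.
From HB Require Import structures.
From mathcomp Require Import all_boot all_order all_algebra.
From mathcomp Require Import all_classical all_reals all_analysis.
From mathcomp Require Import ring lra.
Import Order.TTheory GRing.Theory Num.Theory.
Import numFieldNormedType.Exports.
Set Implicit Arguments. Unset Strict Implicit. Unset Printing Implicit Defensive.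
Local Open Scope classical_set_scope.
Local Open Scope ring_scope.
Section Cvx.
Variables (R : realType) (n : nat).
Local Notation vec := 'rV[R]_n.

Lemma sum_count (V : nmodType) (W s : seq vec) (F : vec -> V) :
  uniq W -> {subset s <= W} ->
  \sum_(x <- s) F x = \sum_(a <- W) F a *+ count_mem a s.
Proof.
move=> uW; elim: s => [|x s IH] sW.
  by rewrite big_nil big1 // => a _; rewrite mulr0n.
rewrite big_cons IH; last by move=> y ys; apply: sW; rewrite inE ys orbT.
have xW : x \in W by apply: sW; rewrite inE eqxx.
rewrite [RHS](eq_bigr (fun a => F a *+ (x == a) + F a *+ count_mem a s)); last first.
  by move=> a _ /=; rewrite mulrnDr.
rewrite big_split /=; congr (_ + _).
rewrite (bigD1_seq x) //= eqxx mulr1n big1_seq ?addr0 // => a /andP[ax _].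
by rewrite eq_sym (negbTE ax) mulr0n.
Qed.

Lemma cvx_coords (W : seq vec) y : uniq W ->
  cvxhull [set a | a \in W] y ->
  exists mu : vec -> R, (forall a, a \in W -> 0 <= mu a) /\
    \sum_(a <- W) mu a = 1 /\ \sum_(a <- W) mu a *: a = y.
Proof.
move=> uW [s [mu [sW [mu0 [mu1 muy]]]]].
have sW' : {subset s <= W} by move=> a /sW.
exists (fun a => (count_mem a s)%:R * mu a); split; [|split].
- move=> a aW; have [as_|] := boolP (a \in s); first by rewrite mulr_ge0 ?mu0.
  move=> anS; have -> : count_mem a s = 0%N by apply/count_memPn.
  by rewrite mul0r.
- rewrite (sum_count mu uW sW') in mu1; rewrite -[in RHS]mu1.
  by apply: eq_bigr => a _; rewrite mulr_natl.
- rewrite (sum_count (fun a => mu a *: a) uW sW') in muy; rewrite -muy.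
  by apply: eq_bigr => a _; rewrite scalerMnl mulr_natl.
Qed.

Lemma coords_cvx (W : seq vec) (mu : vec -> R) :
  (forall a, a \in W -> 0 <= mu a) -> \sum_(a <- W) mu a = 1 ->
  cvxhull [set a | a \in W] (\sum_(a <- W) mu a *: a).
Proof. by move=> mu0 mu1; exists W, mu; split. Qed.

End Cvx.
Section Cvx2.
Variables (R : realType) (n : nat).
Local Notation vec := 'rV[R]_n.

Lemma cvx_comb (W : seq vec) (s : seq vec) (nu : vec -> R) : uniq W ->
  (forall p, p \in s -> cvxhull [set a | a \in W] p) ->
  exists mu : vec -> R, ((forall p, p \in s -> 0 <= nu p) -> forall a, a \in W -> 0 <= mu a) /\
    \sum_(a <- W) mu a = \sum_(p <- s) nu p /\
    \sum_(a <- W) mu a *: a = \sum_(p <- s) nu p *: p.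
Proof.
move=> uW; elim: s => [|p s IH] sW.
  exists (fun=> 0); split; [by move=> _ a _|split; first by rewrite !big_nil big1].
  by rewrite !big_nil big1 // => a _; rewrite scale0r.
have [mu' [mu'0 [mu'1 mu'y]]] : exists mu : vec -> R, ((forall p, p \in s -> 0 <= nu p) -> forall a, a \in W -> 0 <= mu a) /\
    \sum_(a <- W) mu a = \sum_(p <- s) nu p /\
    \sum_(a <- W) mu a *: a = \sum_(p <- s) nu p *: p.
  by apply: IH => q qs; apply: sW; rewrite inE qs orbT.
have [k [k0 [k1 ky]]] := cvx_coords uW (sW p (mem_head p s)).
exists (fun a => nu p * k a + mu' a); split; [|split].
- move=> nu0 a aW; rewrite addr_ge0 ?mulr_ge0 ?k0 ?nu0 ?mem_head //.
  by apply: mu'0 => // q qs; apply: nu0; rewrite inE qs orbT.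
- by rewrite big_split /= -mulr_sumr k1 mulr1 mu'1 big_cons.
- rewrite big_cons -mu'y -ky scaler_sumr -big_split /=.
  by apply: eq_bigr => a _; rewrite scalerDl scalerA.
Qed.

Lemma bary_uniq (W : seq vec) (mu nu : vec -> R) : aff_indep W ->
  \sum_(a <- W) mu a = \sum_(a <- W) nu a ->
  \sum_(a <- W) mu a *: a = \sum_(a <- W) nu a *: a ->
  forall a, a \in W -> mu a = nu a.
Proof.
move=> [uW aW] e1 e2 a aW'.
apply/eqP; rewrite -subr_eq0; apply/eqP.
apply: (aW (fun a => mu a - nu a)) => //.
  by rewrite sumrB e1 subrr.
rewrite (eq_bigr (fun a => mu a *: a - nu a *: a)); last by move=> b _; rewrite scalerBl.
by rewrite sumrB e2 subrr.
Qed.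

Lemma aff_indep_filter (V : seq vec) (P : pred vec) :
  aff_indep V -> aff_indep [seq a <- V | P a].
Proof.
move=> [uV aV]; split; first exact: filter_uniq.
move=> mu s0 s1 a; rewrite mem_filter => /andP[Pa aV'].
have := aV (fun b => if P b then mu b else 0).
rewrite -big_mkcond -big_filter s0 => /(_ erefl).
rewrite (eq_bigr (fun b => if P b then mu b *: b else 0)); last first.
  by move=> b _; case: (P b); rewrite ?scale0r.
rewrite -big_mkcond -big_filter s1 => /(_ erefl a aV').
by rewrite Pa.
Qed.

Lemma coords_one (W : seq vec) (mu : vec -> R) v : uniq W -> v \in W ->
  (forall a, a \in W -> 0 <= mu a) -> \sum_(a <- W) mu a = 1 -> mu v = 1 ->
  \sum_(a <- W) mu a *: a = v.
Proof.
move=> uW vW mu0 mu1 muv.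
have r0 : \sum_(a <- W | a != v) mu a = 0.
  by move: mu1; rewrite (bigD1_seq v) //= muv => e; apply: (addrI 1); rewrite addr0.
have H : forall a, a \in W -> a != v -> mu a = 0.
  move: r0 => /eqP; rewrite big_seq_cond psumr_eq0 => [/allP H a aW av|b /andP[bW _]]; last first.
    exact: mu0.
  by move: (H a aW); rewrite aW av => /eqP.
rewrite (bigD1_seq v) //= muv scale1r big1_seq ?addr0 // => a /andP[av aW].
by rewrite (H a aW av) scale0r.
Qed.

End Cvx2.
Section Cvx3.
Variables (R : realType) (n : nat).
Local Notation vec := 'rV[R]_n.

Lemma coord_le1 (W : seq vec) (mu : vec -> R) v : uniq W -> v \in W ->
  (forall a, a \in W -> 0 <= mu a) -> \sum_(a <- W) mu a = 1 -> mu v <= 1.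
Proof.
move=> uW vW mu0 mu1; rewrite -mu1 (bigD1_seq v) //= lerDl.
by rewrite big_seq_cond sumr_ge0 // => b /andP[bW _]; apply: mu0.
Qed.

Lemma delta_cvx (W : seq vec) v : uniq W -> v \in W ->
  \sum_(a <- W) (a == v)%:R = 1 :> R /\ \sum_(a <- W) (a == v)%:R *: a = v.
Proof.
move=> uW vW.
have s1 : \sum_(a <- W) (a == v)%:R = 1 :> R.
  rewrite (bigD1_seq v) //= eqxx big1_seq ?addr0 // => a /andP[av _].
  by rewrite (negbTE av).
split=> //; apply: coords_one => //; try (by move=> a _; rewrite ler0n).
by rewrite eqxx.
Qed.

Lemma vert_hull (W : seq vec) v : aff_indep W ->
  is_vertex (cvxhull [set a | a \in W]) v <-> v \in W.
Proof.
move=> AW; have uW := AW.1; split.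
- move=> [Hc Hv]; have [mu [mu0 [mu1 muv]]] := cvx_coords uW Hc.
  have [/hasP[a aW mua]|/hasPn H] := boolP (has (fun a => 0 < mu a) W); last first.
    suff : \sum_(a <- W) mu a = 0 by rewrite mu1 => /eqP; rewrite oner_eq0.
    rewrite big_seq big1 // => a aW; apply/eqP; rewrite eq_le mu0 // andbT.
    by rewrite leNgt H.
  have hle := coord_le1 uW aW mu0 mu1.
  have [ea|lta] := eqVneq (mu a) 1.
    by rewrite -muv (coords_one uW aW mu0 mu1 ea).
  have lt1 : mu a < 1 by rewrite lt_neqAle lta hle.
  pose nu b := if b != a then mu b / (1 - mu a) else 0.
  have s0 : \sum_(b <- W | b != a) mu b = 1 - mu a.
    by rewrite -mu1 (bigD1_seq a) //= addrC addrK.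
  have nu0 : forall b, b \in W -> 0 <= nu b.
    move=> b bW; rewrite /nu; case: (b != a) => //.
    by rewrite divr_ge0 ?mu0 // subr_ge0.
  have nu1 : \sum_(b <- W) nu b = 1.
    rewrite /nu -big_mkcond /= -mulr_suml s0 divff //.
    by rewrite subr_eq0 eq_sym.
  have ez : v = mu a *: a + (1 - mu a) *: \sum_(b <- W) nu b *: b.
    rewrite -muv (bigD1_seq a) //= scaler_sumr; congr (_ + _).
    rewrite [RHS](eq_bigr (fun b => if b != a then mu b *: b else 0)); last first.
      move=> b _; rewrite /nu; case: (b != a); rewrite ?scale0r ?scaler0 //.
      by rewrite scalerA mulrCA divff ?mulr1 // subr_eq0 eq_sym.
    by rewrite -big_mkcond.
  have [da1 dav] := delta_cvx uW aW.
  have ha : cvxhull [set a | a \in W] a.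
    by rewrite -[X in cvxhull _ X]dav; apply: coords_cvx => // b _; rewrite ler0n.
  have az := Hv a _ (mu a) ha (coords_cvx nu0 nu1) (introT andP (conj mua lt1)) ez.
  by rewrite ez -az -scalerDl addrC subrK scale1r.
- move=> vW; have [d1 dv] := delta_cvx uW vW; split.
    by rewrite -dv; apply: coords_cvx => // a _; rewrite ler0n.
  move=> y z t /(cvx_coords uW) [my [my0 [my1 myv]]] /(cvx_coords uW) [mz [mz0 [mz1 mzv]]].
  move=> /andP[t0 t1] ve.
  have m1 : \sum_(a <- W) (t * my a + (1 - t) * mz a) = \sum_(a <- W) (a == v)%:R.
    by rewrite big_split /= -!mulr_sumr my1 mz1 d1; ring.
  have mv : \sum_(a <- W) (t * my a + (1 - t) * mz a) *: a = \sum_(a <- W) (a == v)%:R *: a.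
    rewrite dv ve -myv -mzv !scaler_sumr -big_split /=.
    by apply: eq_bigr => a _; rewrite scalerDl !scalerA.
  have := bary_uniq AW m1 mv vW; rewrite eqxx /= => e.
  have hy := coord_le1 uW vW my0 my1; have hz := coord_le1 uW vW mz0 mz1.
  have ey : my v = 1 by nra.
  have ez : mz v = 1 by nra.
  by rewrite -myv -mzv (coords_one uW vW my0 my1 ey) (coords_one uW vW mz0 mz1 ez).
Qed.

End Cvx3.
Section AffCoord.
Variables (R : realType) (n : nat).
Local Notation vec := 'rV[R]_n.

Definition Wmx (V : seq vec) : 'M[R]_(n.+1, n) := \matrix_(i, k) (nth 0 V i) 0 k.
Definition Mmx (V : seq vec) : 'M[R]_(n.+1) := row_mx (const_mx 1 : 'cV[R]_(n.+1)) (Wmx V).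
Definition kap (V : seq vec) (y : vec) (a : vec) : R :=
  ((row_mx (const_mx 1 : 'rV[R]_1) y) *m invmx (Mmx V)) 0 (inord (index a V)).

Lemma sum_nth (X : nmodType) (V : seq vec) (G : vec -> X) : size V = n.+1 ->
  \sum_(a <- V) G a = \sum_(i < n.+1) G (nth 0 V i).
Proof. by move=> sV; rewrite (big_nth 0) sV big_mkord. Qed.

Lemma index_nth_ord (V : seq vec) (i : 'I_n.+1) : uniq V -> size V = n.+1 ->
  inord (index (nth 0 V i) V) = i.
Proof. by move=> uV sV; rewrite index_uniq ?sV // inord_val. Qed.

Lemma Mmx_unit (V : seq vec) : aff_indep V -> size V = n.+1 -> Mmx V \in unitmx.
Proof.
move=> [uV aV] sV.
have H : forall u : 'rV[R]_(n.+1), u *m Mmx V = 0 -> u = 0.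
  move=> u h.
  have E : row_mx (u *m (const_mx 1 : 'cV[R]_(n.+1))) (u *m Wmx V) = (0 : 'M[R]_(1, 1 + n)).
    by rewrite -mul_mx_row; exact: h.
  move/eqP: E; rewrite row_mx_eq0 => /andP[/eqP u1 /eqP uW].
  pose mu a := u 0 (inord (index a V)).
  have e1 : \sum_(a <- V) mu a = 0.
    have := congr1 (fun M : 'cV[R]_1 => M 0 0) u1; rewrite /= !mxE => s.
    rewrite (sum_nth _ sV) /mu -[RHS]s.
    by apply: eq_bigr => i _; rewrite index_nth_ord // mxE mulr1.
  have e2 : \sum_(a <- V) mu a *: a = 0.
    rewrite (sum_nth _ sV); apply/rowP => k; rewrite summxE mxE.
    have := congr1 (fun M : 'rV[R]_n => M 0 k) uW; rewrite /= !mxE => s.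
    rewrite -[RHS]s.
    apply: eq_bigr => i _; rewrite !mxE.
    by rewrite /mu index_nth_ord.
  have := aV mu e1 e2; move=> Z; apply/rowP => i; rewrite mxE.
  have := Z (nth 0 V i) (mem_nth 0 _); rewrite sV ltn_ord /mu index_nth_ord //.
  by move=> /(_ erefl).
rewrite -row_free_unit -kermx_eq0; apply/eqP/row_matrixP => i.
by rewrite row0; apply: H; apply/sub_kermxP; apply: row_sub.
Qed.

End AffCoord.

Section AffCoord2.
Variables (R : realType) (n : nat).
Local Notation vec := 'rV[R]_n.

Lemma row1_0 (y : vec) : (row_mx (const_mx 1 : 'rV[R]_1) y : 'rV_(n.+1)) 0 ord0 = 1.
Proof.
have -> : (ord0 : 'I_(n.+1)) = lshift n (ord0 : 'I_1) by apply: val_inj.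
by apply: etrans (row_mxEl (const_mx 1 : 'rV[R]_1) y 0 ord0) _; rewrite mxE.
Qed.

Lemma row1_lift (y : vec) k : (row_mx (const_mx 1 : 'rV[R]_1) y : 'rV_(n.+1)) 0 (lift ord0 k) = y 0 k.
Proof.
have -> : (lift ord0 k : 'I_(n.+1)) = rshift 1 k by apply: val_inj.
exact: (row_mxEr (const_mx 1 : 'rV[R]_1) y 0 k).
Qed.

Lemma kap_formula (V : seq vec) y a :
  kap V y a = invmx (Mmx V) 0 (inord (index a V)) +
    \sum_(k < n) y 0 k * invmx (Mmx V) (lift ord0 k) (inord (index a V)).
Proof.
by rewrite /kap mxE big_ord_recl row1_0 mul1r; congr (_ + _);
  apply: eq_bigr => k _; rewrite row1_lift.
Qed.

Lemma kap_spec (V : seq vec) y : aff_indep V -> size V = n.+1 ->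
  \sum_(a <- V) kap V y a = 1 /\ \sum_(a <- V) kap V y a *: a = y.
Proof.
move=> AV sV; have uV := AV.1; have Mu := Mmx_unit AV sV.
set u := row_mx (const_mx 1 : 'rV[R]_1) y *m invmx (Mmx V).
have uM : u *m Mmx V = row_mx (const_mx 1 : 'rV[R]_1) y by rewrite /u mulmxKV.
have E : row_mx (u *m (const_mx 1 : 'cV[R]_(n.+1))) (u *m Wmx V) =
         row_mx (const_mx 1 : 'rV[R]_1) y :> 'M[R]_(1, 1 + n).
  by rewrite -mul_mx_row; exact: uM.
have [u1 uW] := eq_row_mx E.
split.
- have := congr1 (fun M : 'rV[R]_1 => M 0 0) u1; rewrite /= !mxE => s.
  rewrite (sum_nth _ sV) -[RHS]s; apply: eq_bigr => i _.
  by rewrite /kap index_nth_ord // [const_mx 1 i 0]mxE mulr1.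
- rewrite (sum_nth _ sV); apply/rowP => k; rewrite summxE.
  have := congr1 (fun M : 'rV[R]_n => M 0 k) uW; rewrite /= !mxE => s.
  rewrite -[RHS]s; apply: eq_bigr => i _.
  by rewrite /kap index_nth_ord // !mxE.
Qed.

Lemma entry_le_norm (y : vec) k : `|y 0 k| <= `|y|.
Proof.
rewrite [leRHS]/Num.norm /= mx_normrE; apply/bigmax_geP; right => /=.
by exists (0, k).
Qed.

Lemma kap_bound (V : seq vec) : exists C : R, 0 <= C /\
  forall y y' a, `|kap V y a - kap V y' a| <= C * `|y - y'|.
Proof.
pose N := invmx (Mmx V).
exists (\sum_(i < n.+1) \sum_(k < n) `|N (lift ord0 k) i|); split.
  by apply: sumr_ge0 => i _; apply: sumr_ge0 => k _.
move=> y y' a; rewrite !kap_formula -/N opprD addrACA subrr add0r -sumrB.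
set i := inord _.
apply: (le_trans (ler_norm_sum _ _ _)).
rewrite mulrC (bigD1 i) //= mulrDr -[X in X <= _]addr0 lerD //; last first.
  by rewrite mulr_ge0 // sumr_ge0 // => j _; rewrite sumr_ge0.
rewrite mulr_sumr; apply: ler_sum => k _.
rewrite -mulrBl normrM; apply: ler_wpM2r => //.
by have := entry_le_norm (y - y') k; rewrite !mxE.
Qed.

End AffCoord2.
Section AffFun.
Variables (R : realType) (n : nat).
Local Notation vec := 'rV[R]_n.

Lemma kap_delta (V : seq vec) a b : aff_indep V -> size V = n.+1 ->
  a \in V -> b \in V -> kap V a b = (b == a)%:R.
Proof.
move=> AV sV aV bV; have [k1 ka] := kap_spec a AV sV.
have [d1 da] := delta_cvx AV.1 aV.
apply: (bary_uniq (mu := kap V a) (nu := fun b => (b == a)%:R) AV _ _ bV).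
  by rewrite k1 d1.
by rewrite ka da.
Qed.

Lemma aff_fun (V : seq vec) (g : vec -> R) : aff_indep V -> size V = n.+1 ->
  exists (w : vec) (t : R), forall a, a \in V -> dotv w a - t = g a.
Proof.
move=> AV sV; pose N := invmx (Mmx V).
exists (\row_k \sum_(b <- V) N (lift ord0 k) (inord (index b V)) * g b).
exists (- \sum_(b <- V) N 0 (inord (index b V)) * g b).
move=> a aV.
have -> : g a = \sum_(b <- V) kap V a b * g b.
  rewrite (bigD1_seq a) //= ?kap_delta // ?eqxx ?mul1r ?big1_seq ?addr0 //; last exact: AV.1.
  by move=> b /andP[ba bV]; rewrite kap_delta // (negbTE ba) mul0r.
rewrite opprK addrC /dotv.
under [RHS]eq_bigr do rewrite kap_formula mulrDl -/N.
rewrite big_split /=; congr (_ + _).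
under [RHS]eq_bigr do rewrite mulr_suml.
rewrite [RHS]exchange_big /=; apply: eq_bigr => k _.
rewrite mxE mulr_suml; apply: eq_bigr => b _; ring.
Qed.

End AffFun.
Section GamSec.
Variables (R : realType) (n : nat).
Local Notation vec := 'rV[R]_n.

Lemma dotv_sum (w : vec) (s : seq vec) (mu : vec -> R) :
  dotv w (\sum_(a <- s) mu a *: a) = \sum_(a <- s) mu a * dotv w a.
Proof.
rewrite /dotv; under eq_bigr do rewrite summxE mulr_sumr.
rewrite exchange_big /=; apply: eq_bigr => a _; rewrite mulr_sumr.
by apply: eq_bigr => k _; rewrite mxE; ring.
Qed.

Lemma pt_in_hull (V : seq vec) a : uniq V -> a \in V -> cvxhull [set a | a \in V] a.
Proof.
move=> uV aV; have [d1 dv] := delta_cvx uV aV.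
by rewrite -[X in cvxhull _ X]dv; apply: coords_cvx => // b _; rewrite ler0n.
Qed.

Lemma sum_filter_zero (X : nmodType) (V : seq vec) (P : pred vec) (F : vec -> X) :
  (forall a, a \in V -> ~~ P a -> F a = 0) ->
  \sum_(a <- [seq a <- V | P a]) F a = \sum_(a <- V) F a.
Proof.
move=> H; rewrite big_filter big_mkcond /=; apply: eq_big_seq => a aV.
by case: ifP => // /negbT /(H a aV) ->.
Qed.

Lemma hull_filter (V : seq vec) (P : pred vec) y : uniq V ->
  cvxhull [set a | a \in [seq a <- V | P a]] y <->
  exists mu : vec -> R, (forall a, a \in V -> 0 <= mu a) /\
    (forall a, a \in V -> ~~ P a -> mu a = 0) /\
    \sum_(a <- V) mu a = 1 /\ \sum_(a <- V) mu a *: a = y.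
Proof.
move=> uV; split.
- move=> /(cvx_coords (filter_uniq _ uV)) [mu [mu0 [mu1 muy]]].
  exists (fun a => if P a then mu a else 0); split; [|split; [|split]].
  + move=> a aV; case: ifP => Pa //; apply: mu0; by rewrite mem_filter Pa.
  + by move=> a _ /negbTE ->.
  + by rewrite -big_mkcond -big_filter.
  + rewrite -muy [RHS]big_filter [RHS]big_mkcond /=; apply: eq_bigr => a _.
    by case: ifP; rewrite ?scale0r.
- move=> [mu [mu0 [mu00 [mu1 muy]]]].
  have -> : y = \sum_(a <- [seq a <- V | P a]) mu a *: a.
    rewrite sum_filter_zero // => a aV nPa; by rewrite mu00 // scale0r.
  apply: coords_cvx.
    by move=> a; rewrite mem_filter => /andP[_]; apply: mu0.
  by rewrite sum_filter_zero.
Qed.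

Lemma Gam_eq (V Am : seq vec) (lam : vec -> vec -> R) :
  aff_indep V -> size V = n.+1 ->
  (forall b, b \in Am -> is_bary V b (lam b)) ->
  (forall b a, b \in Am -> a \in V -> 0 <= lam b a) ->
  Gam V Am = cvxhull [set a | a \in [seq a <- V | has (fun b => 0 < lam b a) Am]].
Proof.
move=> AV sV bary lam0; have uV := AV.1.
set P := fun a => has (fun b => 0 < lam b a) Am.
set U := [seq a <- V | P a].
have lamP : forall b a, b \in Am -> a \in V -> ~~ P a -> lam b a = 0.
  move=> b a bA aV /hasPn /(_ b bA); rewrite -leNgt => h.
  by apply/eqP; rewrite eq_le h lam0.
have AmU : forall b, b \in Am -> cvxhull [set a | a \in U] b.
  move=> b bA; apply/(hull_filter _ _ uV); exists (lam b); split; [|split].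
  - by move=> a; apply: lam0.
  - by move=> a; apply: lamP.
  - exact: bary.
have [w [t wt]] := aff_fun (fun a => if P a then 0 else -1 : R) AV sV.
have dwt : forall mu : vec -> R, \sum_(a <- V) mu a = 1 ->
    dotv w (\sum_(a <- V) mu a *: a) = t + \sum_(a <- V) mu a * (if P a then 0 else -1).
  move=> mu mu1; rewrite dotv_sum.
  have dw : forall a, a \in V -> dotv w a = t + (if P a then 0 else -1).
    by move=> a aV; rewrite -(wt a aV) addrC subrK.
  under eq_big_seq => a aV do rewrite dw //.
  under eq_bigr do rewrite mulrDr.
  by rewrite big_split /= -mulr_suml mu1 mul1r.
apply/seteqP; split => x.
- move=> Hx; apply: Hx; last by move=> b bA; exact: AmU.
  exists w, t; split.
  + move=> y /(cvx_coords uV) [mu [mu0 [mu1 <-]]]; rewrite dwt // gerDl.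
    rewrite big_seq sumr_le0 // => a aV; case: ifP => _; first by rewrite mulr0.
    by rewrite mulrN1 oppr_le0 mu0.
  + apply/seteqP; split => y.
    * move=> /(hull_filter _ _ uV) [mu [mu0 [mu00 [mu1 <-]]]]; split.
        exact: coords_cvx.
      rewrite /= dwt // big1_seq ?addr0 // => a /andP[_ aV].
      by case: ifP => Pa; [rewrite mulr0 | rewrite mu00 ?Pa // mul0r].
    * move=> [/(cvx_coords uV) [mu [mu0 [mu1 muy]]]] /=.
      rewrite -muy dwt // => e0.
      have e : \sum_(a <- V) mu a * (if P a then 0 else -1) = 0.
        by apply: (addrI t); rewrite addr0.
      apply/(hull_filter _ _ uV); exists mu; split => //; split => //.
      move=> a aV nPa.
      have : \sum_(a <- V) - (mu a * (if P a then 0 else -1)) = 0 by rewrite sumrN e oppr0.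
      move=> /eqP; rewrite big_seq psumr_eq0 => [/allP /(_ a aV)|b bV]; last first.
        by case: ifP => _; rewrite ?mulr0 ?oppr0 // mulrN1 opprK mu0.
      by rewrite aV (negbTE nPa) mulrN1 opprK /= => /eqP.
- move=> Hx F [w' [t' [Hle ->]]] SF.
  have Pt : forall a, a \in V -> P a -> dotv w' a = t'.
    move=> a aV /hasP [b bA lba].
    have [Fb1 Fb2] := SF b bA.
    have [bl1 blv] := bary b bA.
    move: Fb2; rewrite /= -blv dotv_sum => e.
    have : \sum_(a <- V) lam b a * (t' - dotv w' a) = 0.
      under eq_bigr do rewrite mulrBr.
      by rewrite sumrB -mulr_suml bl1 mul1r e subrr.
    move=> /eqP; rewrite big_seq psumr_eq0 => [/allP /(_ a aV)|c cV]; last first.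
      by rewrite mulr_ge0 ?lam0 // subr_ge0; apply: Hle; apply: pt_in_hull.
    rewrite aV /= mulf_eq0 gt_eqF //= subr_eq0 => /eqP <-; by [].
  move/(hull_filter _ _ uV): Hx => [mu [mu0 [mu00 [mu1 <-]]]]; split.
    exact: coords_cvx.
  rewrite /= dotv_sum -[RHS]mul1r -mu1 mulr_suml; apply: eq_big_seq => a aV.
  have [Pa|nPa] := boolP (P a); first by rewrite Pt.
  by rewrite mu00 // !mul0r.
Qed.

End GamSec.
Section Der.
Variables (R : realType) (n : nat).
Local Notation vec := 'rV[R]_n.

Lemma mono_shift (a : vec) (i : 'I_n) (h : R) :
  mono (h *: delta_mx 0 i + onev R n) a = (h + 1) `^ (a 0 i).
Proof.
rewrite /mono (bigD1 i) //= big1 ?mulr1 => [|k ki]; first by rewrite !mxE !eqxx /= mulr1.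
by rewrite !mxE (negbTE ki) andbF mulr0 add0r powR1.
Qed.

Lemma seval_shift (g : signomial R n) (i : 'I_n) (h : R) :
  seval g (h *: delta_mx 0 i + onev R n) = \sum_(t <- g) t.1 * (h + 1) `^ (t.2 0 i).
Proof. by apply: eq_bigr => t _; rewrite mono_shift. Qed.

End Der.
Section Der2.
Variables (R : realType) (n : nat).
Local Notation vec := 'rV[R]_n.

Lemma shift_quot (f : R -> R) (c x v : R) :
  (fun h : R => h^-1 *: (((f \o shift c) \o shift x) (h *: v) - (f \o shift c) x)) =
  (fun h : R => h^-1 *: ((f \o shift (x + c)) (h *: v) - f (x + c))).
Proof. by apply/funext => h /=; rewrite addrA. Qed.

Lemma is_derive_powR1 (p : R) : is_derive (0:R) (1:R) (fun h => (h + 1) `^ p) p.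
Proof.
have e : (fun h : R => (h + 1) `^ p) = (fun x : R => x `^ p) \o shift 1 by [].
have d1 : derivable (fun x : R => x `^ p) (1:R) 1.
  by apply: derivable_powR; rewrite in_itv /= ltr01.
have dv : derive (fun x : R => x `^ p) (1:R) 1 = p.
  by rewrite -derive1E powR_derive1 ?in_itv /= ?ltr01 // powR1 mulr1.
rewrite e; split.
  rewrite /derivable shift_quot add0r; exact: d1.
by rewrite /derive shift_quot add0r; exact: dv.
Qed.

Lemma is_derive_ext (f g : R -> R) (x v df : R) :
  (forall h, f h = g h) -> is_derive x v f df -> is_derive x v g df.
Proof. by move=> fg; have -> : g = f by apply/funext => h; rewrite fg. Qed.

Lemma is_derive_seval (g : signomial R n) (i : 'I_n) :
  is_derive (0:R) (1:R) (fun h => \sum_(t <- g) t.1 * (h + 1) `^ (t.2 0 i))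
    (\sum_(t <- g) t.1 * t.2 0 i).
Proof.
elim: g => [|t g IH].
  rewrite big_nil; apply: (is_derive_ext (f := cst 0)).
    by move=> h; rewrite big_nil.

rewrite big_cons.
apply: (is_derive_ext (f := (t.1 *: (fun h : R => (h + 1) `^ (t.2 0 i))) +
   (fun h => \sum_(t <- g) t.1 * (h + 1) `^ (t.2 0 i)))).
  by move=> h; rewrite big_cons.
apply: is_deriveD; exact: is_deriveZ (is_derive_powR1 _).
Qed.

Lemma derive_seval (g : signomial R n) (i : 'I_n) :
  derive (seval g) (onev R n) (delta_mx 0 i) = \sum_(t <- g) t.1 * t.2 0 i.
Proof.
case: (is_derive_seval g i) => _ <-.
rewrite /derive; f_equal; f_equal; apply/funext => h /=.
rewrite !seval_shift !add0r; congr (_ *: (_ - _)).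
  by apply: eq_bigr => t _; rewrite addr0 -[h%:A]/(h * 1) mulr1.
by apply: eq_bigr => t _; rewrite powR1 /mono big1 // => k _; rewrite mxE powR1.
Qed.

End Der2.
Section AMGM.
Variables (R : realType) (n : nat).
Local Notation vec := 'rV[R]_n.

Lemma mono_exp (x a : vec) : posv x ->
  mono x a = expR (dotv (\row_k ln (x 0 k)) a).
Proof.
move=> px; rewrite /mono /dotv expR_sum; apply: eq_bigr => k _.
by rewrite mxE /powR gt_eqF ?px // mulrC.
Qed.

Lemma expR_tangent (u v : R) : expR v * (1 + (u - v)) <= expR u.
Proof.
have -> : expR u = expR v * expR (u - v) by rewrite -expRD addrC subrK.
by rewrite ler_wpM2l ?expR_ge0 // expR_ge1Dx.
Qed.

Lemma amgm (s : seq vec) (lam : vec -> R) (b x : vec) : posv x ->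
  (forall a, a \in s -> 0 <= lam a) -> \sum_(a <- s) lam a = 1 ->
  \sum_(a <- s) lam a *: a = b ->
  mono x b <= \sum_(a <- s) lam a * mono x a.
Proof.
move=> px l0 l1 lb; rewrite !mono_exp //; set l := \row_k _.
apply: (le_trans _ (_ : \sum_(a <- s) lam a * (expR (dotv l b) * (1 + (dotv l a - dotv l b))) <= _)).
  under eq_bigr do rewrite mulrCA.
  rewrite -mulr_sumr; under eq_bigr do rewrite mulrDr mulr1 mulrBr.
  rewrite big_split /= sumrB -mulr_suml l1 mul1r -dotv_sum lb subrr addr0.
  by rewrite mulr1.
rewrite big_seq [leRHS]big_seq; apply: ler_sum => a aS.
apply: ler_wpM2l; [exact: l0|]; rewrite (mono_exp a px); exact: expR_tangent.
Qed.

End AMGM.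
Section Relint.
Variables (R : realType) (n : nat).
Local Notation vec := 'rV[R]_n.

Lemma pos_lb (s : seq vec) (f : vec -> R) : (forall a, a \in s -> 0 < f a) ->
  exists m : R, 0 < m /\ forall a, a \in s -> m <= f a.
Proof.
elim: s => [|a s IH] H; first by exists 1; split.
have [m [m0 mH]] : exists m : R, 0 < m /\ forall a, a \in s -> m <= f a.
  by apply: IH => b bs; apply: H; rewrite inE bs orbT.
exists (Num.min (f a) m); split.
  by rewrite lt_min m0 H ?mem_head.
move=> c; rewrite inE => /orP[/eqP ->|cs]; first by rewrite ge_min lexx.
by rewrite ge_min mH ?orbT.
Qed.

Lemma relint_circ (V : seq vec) (lam : vec -> R) b : aff_indep V -> size V = n.+1 ->
  (forall a, a \in V -> 0 <= lam a) -> \sum_(a <- V) lam a = 1 ->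
  \sum_(a <- V) lam a *: a = b ->
  relint (cvxhull [set a | a \in [seq a <- V | 0 < lam a]]) b.
Proof.
move=> AV sV l0 l1 lb; have uV := AV.1.
set U := [seq a <- V | 0 < lam a].
have Cb : cvxhull [set a | a \in U] b.
  apply/(hull_filter _ _ uV); exists lam; split => //; split => //.
  by move=> a aV; rewrite -leNgt => h; apply/eqP; rewrite eq_le h l0.
split => //.
have [C [C0 HC]] := kap_bound V.
have [m [m0 mH]] : exists m : R, 0 < m /\ forall a, a \in U -> m <= lam a.
  by apply: pos_lb => a; rewrite mem_filter => /andP[].
exists (m / (C + 1)); split; first by rewrite divr_gt0 // ltr_wpDl.
move=> y [s [mu [sC [mu1 muy]]]] yb.
have [nu [_ [nu1 nuy]]] := cvx_comb mu (filter_uniq _ uV) sC.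
rewrite mu1 muy in nu1 nuy.
pose nu' a := if 0 < lam a then nu a else 0.
have nu'1 : \sum_(a <- V) nu' a = 1 by rewrite -big_mkcond -big_filter.
have nu'y : \sum_(a <- V) nu' a *: a = y.
  rewrite -nuy [RHS]big_filter [RHS]big_mkcond; apply: eq_bigr => a _.
  by rewrite /nu'; case: ifP; rewrite ?scale0r.
have [k1 ky] := kap_spec y AV sV.
have [kb1 kby] := kap_spec b AV sV.
have ek : forall a, a \in V -> kap V y a = nu' a.
  by apply: (bary_uniq AV); rewrite ?k1 ?nu'1 ?ky ?nu'y.
have ekb : forall a, a \in V -> kap V b a = lam a.
  by apply: (bary_uniq AV); rewrite ?kb1 ?l1 ?kby ?lb.
rewrite -nuy; apply: coords_cvx => //.
move=> a; rewrite mem_filter => /andP[la aV].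
have := HC y b a; rewrite ek // ekb // /nu' la => h.
have hm : m <= lam a by apply: mH; rewrite mem_filter la aV.
have hCe : C * `|y - b| < m.
  apply: (le_lt_trans (_ : _ <= C * (m / (C + 1)))); first by rewrite ler_wpM2l // ltW.
  have C1 : 0 < C + 1 by rewrite ltr_wpDl.
  rewrite mulrA ltr_pdivrMr //; nra.
move: h; rewrite ler_norml => /andP[h1 _].
lra.
Qed.

End Relint.
Section Coef.
Variables (R : realType) (n : nat).
Local Notation vec := 'rV[R]_n.

Lemma asbool_iff (P : Prop) (b : bool) : (P <-> b) -> `[< P >] = b.
Proof. by case: b => h; [apply/asboolT; apply/h | apply/asboolF => /h]. Qed.

Lemma coef_cat (s1 s2 : signomial R n) x : coef (s1 ++ s2) x = coef s1 x + coef s2 x.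
Proof. by rewrite /coef big_cat. Qed.

Lemma coef_map (s : seq vec) (F : vec -> R) x : uniq s ->
  coef [seq (F a, a) | a <- s] x = if x \in s then F x else 0.
Proof.
move=> us; rewrite /coef big_map /=; case: ifP => xs.
  rewrite (bigD1_seq x) //= eqxx big1_seq ?addr0 // => a /andP[ax _].
  by rewrite (negbTE ax).
rewrite big1_seq // => a /andP[_ ah]; case: eqP => // ax.
by rewrite -ax ah in xs.
Qed.

Lemma coef_single (k : R) (b x : vec) : coef [:: (k, b)] x = if x == b then k else 0.
Proof. by rewrite /coef big_cons big_nil addr0 /= eq_sym. Qed.

Lemma mono_one (a : vec) : mono (onev R n) a = 1.
Proof. by rewrite /mono big1 // => k _; rewrite mxE powR1. Qed.

Lemma posv_one : posv (onev R n).
Proof. by move=> i; rewrite mxE ltr01. Qed.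

Lemma seval_one_map (s : seq vec) (F : vec -> R) :
  seval [seq (F a, a) | a <- s] (onev R n) = \sum_(a <- s) F a.
Proof. by rewrite /seval big_map; apply: eq_bigr => a _; rewrite mono_one mulr1. Qed.

Lemma dsum_map (s : seq vec) (F : vec -> R) (i : 'I_n) :
  \sum_(t <- [seq (F a, a) | a <- s]) t.1 * t.2 0 i = \sum_(a <- s) F a * a 0 i.
Proof. by rewrite big_map. Qed.

Lemma sum_pos (s : seq vec) (F : vec -> R) : (forall a, a \in s -> 0 <= F a) ->
  (exists2 a, a \in s & 0 < F a) -> 0 < \sum_(a <- s) F a.
Proof.
elim: s => [|a s IH] H [x]; first by rewrite in_nil.
rewrite big_cons inE => /orP[/eqP ->|xs] Fx.
  by rewrite ltr_wpDr // big_seq sumr_ge0 // => b bs; apply: H; rewrite inE bs orbT.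
rewrite ltr_wpDl ?H ?mem_head //; apply: IH; last by exists x.
by move=> b bs; apply: H; rewrite inE bs orbT.
Qed.

Lemma hull_cup (W : seq vec) (B : set vec) : uniq W ->
  (forall b, B b -> cvxhull [set a | a \in W] b) ->
  cvxhull ([set a | a \in W] `|` B) = cvxhull [set a | a \in W].
Proof.
move=> uW HB; apply/seteqP; split => y.
- move=> [s [mu [sB [mu0 [mu1 <-]]]]].
  have [nu [nu0 [nu1 nuy]]] := cvx_comb mu uW (s := s) (fun p ps => match sB p ps with
     | or_introl h => pt_in_hull uW h | or_intror h => HB p h end).
  rewrite -nuy; apply: coords_cvx; first exact: nu0.
  by rewrite nu1.
- move=> [s [mu [sW H]]]; exists s, mu; split => // a /sW h; by left.
Qed.

End Coef.
Section QFacts.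
Variables (R : realType) (n : nat).
Local Notation vec := 'rV[R]_n.

Lemma seval_cat (s1 s2 : signomial R n) x : seval (s1 ++ s2) x = seval s1 x + seval s2 x.
Proof. by rewrite /seval big_cat. Qed.

Lemma qfacts (V Am : seq vec) (lam : vec -> vec -> R) (c : vec -> R) (dj : R) :
  aff_indep V -> size V = n.+1 -> uniq Am -> (forall a, a \in V -> a \notin Am) ->
  (forall b, b \in Am -> 0 < c b) -> (forall b, b \in Am -> is_bary V b (lam b)) ->
  (forall b a, b \in Am -> a \in V -> 0 <= lam b a) -> 0 < dj ->
  let q := qsig V Am lam c dj in
  pos_supp q = vertices (Gam V Am) /\ neg_supp q = [set b | b \in Am] /\
  ext_circuit (vertices (Gam V Am)) [set b | b \in Am] /\ Sing_pos q (onev R n).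
Proof.
move=> AV sV uAm disj cpos bary lam0 dj0 q.
have uV := AV.1.
set P := fun a => has (fun b => 0 < lam b a) Am.
set U := [seq a <- V | P a].
have uU : uniq U by apply: filter_uniq.
have AU : aff_indep U by apply: aff_indep_filter.
have GE : Gam V Am = cvxhull [set a | a \in U] by apply: Gam_eq.
have VG : vertices (Gam V Am) = [set a | a \in U].
  by rewrite GE; apply/seteqP; split => x /=; move/(vert_hull x AU).
have qU : [seq a <- V | `[< is_vertex (Gam V Am) a >]] = U.
  apply: eq_in_filter => a aV; apply: asbool_iff; rewrite GE.
  by rewrite (vert_hull a AU) mem_filter aV andbT.
have lamP : forall b a, b \in Am -> a \in V -> ~~ P a -> lam b a = 0.
  move=> b a bA aV /hasPn /(_ b bA); rewrite -leNgt => h.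
  by apply/eqP; rewrite eq_le h lam0.
set S := fun a => \sum_(b <- Am) lam b a * c b.
have coefq : forall x, coef q x =
    (if x \in U then dj * S x else 0 : R) + (if x \in Am then - (dj * c x) else 0 : R).
  by move=> x; rewrite /q /qsig qU coef_cat !coef_map.
have Spos : forall x, x \in U -> 0 < S x.
  move=> x; rewrite mem_filter => /andP[/hasP[b bA lb] xV].
  apply: sum_pos; first by move=> b' b'A; rewrite mulr_ge0 ?lam0 // ltW ?cpos.
  by exists b => //; rewrite mulr_gt0 ?cpos.
have UnAm : forall x, x \in U -> x \notin Am.
  by move=> x; rewrite mem_filter => /andP[_ /disj].
have AmU : forall b, b \in Am -> cvxhull [set a | a \in U] b.
  move=> b bA; apply/(hull_filter _ _ uV); exists (lam b); split; [|split].
  - by move=> a; apply: lam0.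
  - by move=> a; apply: lamP.
  - exact: bary.
have SG : forall G : vec -> R, \sum_(a <- U) dj * S a * G a =
    dj * \sum_(b <- Am) c b * \sum_(a <- V) lam b a * G a.
  move=> G; rewrite /S; under eq_bigr do rewrite mulr_sumr mulr_suml.
  rewrite exchange_big mulr_sumr big_seq [RHS]big_seq; apply: eq_bigr => b bA.
  rewrite -[in RHS](sum_filter_zero (P := P)); last first.
    by move=> a aV nPa; rewrite lamP // mul0r.
  by rewrite -/U mulr_sumr !mulr_sumr; apply: eq_bigr => a _; ring.
split; [|split; [|split]].
- rewrite VG; apply/seteqP; split => x; rewrite /pos_supp /= coefq.
    case: ifP => // _; case: ifP => xA; last by rewrite addr0 ltxx.
    have h1 : 0 < dj * c x by rewrite mulr_gt0 ?cpos.
    by rewrite add0r oppr_gt0 => h2; have := lt_trans h1 h2; rewrite ltxx.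
  move=> xU; rewrite xU (negbTE (UnAm x xU)) /=.
  by rewrite addr0 mulr_gt0 ?Spos.
- apply/seteqP; split => x; rewrite /neg_supp /= coefq.
    move=> h; case: (boolP (x \in Am)) => // xA; exfalso; move: h.
    rewrite (negbTE xA) /= addr0; case: ifP => xU; last by rewrite ltxx.
    have h1 : 0 < dj * S x by rewrite mulr_gt0 ?Spos.
    by move=> h2; have := lt_trans h1 h2; rewrite ltxx.
  move=> xA; have xU : x \notin U by apply/negP => /UnAm; rewrite xA.
  by rewrite (negbTE xU) xA /= add0r oppr_lt0 mulr_gt0 ?cpos.
- right; rewrite VG /simplex_case (hull_cup (B := [set b | b \in Am]) uU AmU); split.
    by exists U.
  by apply/seteqP; split => x /=; move/(vert_hull x AU).
- split; first exact: posv_one.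
  split.
    rewrite /q /qsig qU seval_cat !seval_one_map.
    have e1 : \sum_(a <- U) dj * S a = dj * \sum_(b <- Am) c b.
      transitivity (\sum_(a <- U) dj * S a * 1); first by under [RHS]eq_bigr do rewrite mulr1.
      rewrite SG; congr (_ * _); rewrite big_seq [RHS]big_seq; apply: eq_bigr => b bA.
      by under eq_bigr do rewrite mulr1; rewrite (bary b bA).1 mulr1.
    by rewrite e1 sumrN -mulr_sumr subrr.
  move=> i; rewrite derive_seval /q /qsig qU big_cat /= !dsum_map.
  rewrite SG mxE mul1r.
  under [X in _ + X]eq_bigr do rewrite mulNr.
  rewrite sumrN mulr_sumr -sumrB big1_seq // => b /andP[_ bA].
  have [_ bv] := bary b bA.
  have := congr1 (fun M : vec => M 0 i) bv; rewrite /= summxE => e.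
  have -> : \sum_(a <- V) lam b a * a 0 i = b 0 i.
    by rewrite -e; apply: eq_bigr => a _; rewrite mxE.
  by rewrite mulrA subrr.
Qed.

End QFacts.
Section Pieces.
Variables (R : realType) (n : nat).
Local Notation vec := 'rV[R]_n.

Definition gpiece (V : seq vec) (lamb : vec -> R) (k : R) (b : vec) : signomial R n :=
  [seq (k * lamb a, a) | a <- [seq a <- V | 0 < lamb a]] ++ [:: (- k, b)].

Lemma coef_gpiece (V : seq vec) (lamb : vec -> R) (k : R) b x : uniq V ->
  (forall a, a \in V -> 0 <= lamb a) ->
  coef (gpiece V lamb k b) x = (if x \in V then k * lamb x else 0 : R) + (if x == b then - k else 0 : R).
Proof.
move=> uV l0; rewrite /gpiece coef_cat coef_map ?filter_uniq // coef_single mem_filter.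
congr (_ + _); case: (boolP (x \in V)) => xV; rewrite ?andbF ?andbT //.
case: ifP => // /negbT; rewrite -leNgt => h.
have -> : lamb x = 0 by apply/eqP; rewrite eq_le h l0.
by rewrite mulr0.
Qed.

Lemma gpiece_facts (V : seq vec) (lamb : vec -> R) (k : R) b :
  aff_indep V -> size V = n.+1 -> b \notin V -> 0 < k ->
  is_bary V b lamb -> (forall a, a \in V -> 0 <= lamb a) ->
  copositive (gpiece V lamb k b) /\
  circuit (pos_supp (gpiece V lamb k b)) (neg_supp (gpiece V lamb k b)).
Proof.
move=> AV sV bV k0 [l1 lb] l0; have uV := AV.1.
set W := [seq a <- V | 0 < lamb a].
have uW : uniq W by apply: filter_uniq.
have bW : b \notin W by rewrite mem_filter negb_and bV orbT.
have cf : forall x, coef (gpiece V lamb k b) x =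
    (if x \in W then k * lamb x else 0 : R) + (if x == b then - k else 0 : R).
  by move=> x; rewrite /gpiece coef_cat coef_map // coef_single.
have lW1 : \sum_(a <- W) lamb a = 1.
  rewrite sum_filter_zero // => a aV; rewrite -leNgt => h.
  by apply/eqP; rewrite eq_le h l0.
have lWb : \sum_(a <- W) lamb a *: a = b.
  rewrite sum_filter_zero // => a aV; rewrite -leNgt => h.
  have -> : lamb a = 0 by apply/eqP; rewrite eq_le h l0.
  by rewrite scale0r.
have AW : aff_indep W by apply: aff_indep_filter.
have lamW : forall a, a \in W -> 0 < lamb a by move=> a; rewrite mem_filter => /andP[].
have PS : pos_supp (gpiece V lamb k b) = [set a | a \in W].
  apply/seteqP; split => x; rewrite /pos_supp /= cf.
    case: ifP => // _; case: eqP => _; last by rewrite addr0 ltxx.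
    by rewrite add0r oppr_gt0 => h; have := lt_trans h k0; rewrite ltxx.
  move=> xW; have xb : x != b by apply/negP => /eqP xb; rewrite -xb xW in bW.
  by rewrite xW (negbTE xb) addr0 mulr_gt0 ?lamW.
have NS : neg_supp (gpiece V lamb k b) = [set b].
  apply/seteqP; split => x; rewrite /neg_supp /= cf.
    case: eqP => // _; rewrite addr0; case: ifP => xW; last by rewrite ltxx.
    by move=> h; have := lt_trans (mulr_gt0 k0 (lamW x xW)) h; rewrite ltxx.
  by move=> ->; rewrite (negbTE bW) eqxx add0r oppr_lt0.
have bC : cvxhull [set a | a \in W] b.
  by rewrite -lWb; apply: coords_cvx => // a aW; apply: ltW; apply: lamW.
split.
- move=> x px; rewrite /gpiece seval_cat /seval big_map big_cons big_nil addr0 /=.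
  have h := amgm px (fun a aW => ltW (lamW a aW)) lW1 lWb.
  rewrite (eq_bigr (fun a => k * (lamb a * mono x a))); last by move=> a _; rewrite mulrA.
  rewrite -mulr_sumr mulNr -mulrBr; apply: mulr_ge0; first exact: ltW.
  by rewrite subr_ge0.
- right; rewrite PS NS; split; [|split].
  + rewrite /simplex_case (hull_cup (B := [set b]) uW); last by move=> y /= ->.
    split; first by exists W.
    by apply/seteqP; split => x /=; move/(vert_hull x AW).
  + by exists b.
  + by move=> y /= ->; apply: relint_circ.
Qed.

End Pieces.
Section MainHelpers.
Variables (R : realType) (n : nat).
Local Notation vec := 'rV[R]_n.

Lemma lam_nonneg (V : seq vec) (lamb : vec -> R) b : aff_indep V ->
  cvxhull [set a | a \in V] b -> is_bary V b lamb -> forall a, a \in V -> 0 <= lamb a.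
Proof.
move=> AV /(cvx_coords AV.1) [mu [mu0 [mu1 mub]]] [l1 lb] a aV.
rewrite (bary_uniq (mu := lamb) (nu := mu) AV _ _ aV) ?mu0 //.
  by rewrite l1 mu1.
by rewrite lb mub.
Qed.

Lemma qU_lem (V Am : seq vec) (lam : vec -> vec -> R) :
  aff_indep V -> size V = n.+1 ->
  (forall b, b \in Am -> is_bary V b (lam b)) ->
  (forall b a, b \in Am -> a \in V -> 0 <= lam b a) ->
  [seq a <- V | `[< is_vertex (Gam V Am) a >]] =
  [seq a <- V | has (fun b => 0 < lam b a) Am].
Proof.
move=> AV sV bary lam0.
have AU := aff_indep_filter (fun a => has (fun b => 0 < lam b a) Am) AV.
apply: eq_in_filter => a aV; apply: asbool_iff; rewrite (Gam_eq AV sV bary lam0).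
by rewrite (vert_hull a AU) mem_filter aV andbT.
Qed.

Lemma coef_qsig (V Am : seq vec) (lam : vec -> vec -> R) (c : vec -> R) dj x :
  aff_indep V -> size V = n.+1 -> uniq Am ->
  (forall b, b \in Am -> is_bary V b (lam b)) ->
  (forall b a, b \in Am -> a \in V -> 0 <= lam b a) ->
  coef (qsig V Am lam c dj) x =
    (if x \in V then dj * \sum_(b <- Am) lam b x * c b else 0 : R) +
    (if x \in Am then - (dj * c x) else 0 : R).
Proof.
move=> AV sV uAm bary lam0.
rewrite /qsig (qU_lem AV sV bary lam0) coef_cat !coef_map ?filter_uniq //; last exact: AV.1.
congr (_ + _); rewrite mem_filter; case: (boolP (x \in V)) => xV; rewrite ?andbF ?andbT //.
case: ifP => // /negbT /hasPn H.
rewrite big_seq big1 ?mulr0 // => b bA.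
have := H b bA; rewrite -leNgt => h.
have -> : lam b x = 0 by apply/eqP; rewrite eq_le h lam0.
by rewrite mul0r.
Qed.

Lemma coef_sig (Ap Am : seq vec) (c : vec -> R) x : uniq Ap -> uniq Am ->
  coef (sig_of Ap Am c) x = (if x \in Ap then c x else 0 : R) + (if x \in Am then - c x else 0 : R).
Proof.
move=> uAp uAm; rewrite /sig_of coef_cat coef_map // (coef_map (fun b => - c b)) //.
Qed.

Lemma sum_ite (s : seq vec) (F : vec -> R) x : uniq s ->
  \sum_(b <- s) (if x == b then F b else 0) = if x \in s then F x else 0.
Proof.
move=> us; case: ifP => xs.
  rewrite (bigD1_seq x) //= eqxx big1_seq ?addr0 // => b /andP[bx _].
  by rewrite eq_sym (negbTE bx).
rewrite big1_seq // => b /andP[_ bs]; case: eqP => // xb.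
by rewrite xb bs in xs.
Qed.

End MainHelpers.
Theorem lemma3p12 (R : realType) (n r : nat)
  (Ap Am : seq 'rV[R]_n) (V : 'I_r -> seq 'rV[R]_n)
  (lam : 'I_r -> 'rV[R]_n -> 'rV[R]_n -> R) (c : 'rV[R]_n -> R) :
  (* A_+, A_- disjoint finite sets, A = A_+ u A_- full dimensional *)
  uniq Ap -> uniq Am -> (forall a, a \in Ap -> a \notin Am) ->
  affhull [set a | a \in Ap ++ Am] = setT ->
  (* Delta_j = cvxhull(V j): full-dimensional simplices with vertices in A_+ *)
  (forall j, aff_indep (V j) /\ size (V j) = n.+1 /\
             (forall a, a \in V j -> a \in Ap)) ->
  (* A_- contained in Delta_j *)
  (forall j b, b \in Am -> cvxhull [set a | a \in V j] b) ->
  (* lam j b = barycentric coordinates of b w.r.t. the vertices of Delta_j *)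
  (forall j b, b \in Am -> is_bary (V j) b (lam j b)) ->
  (* nonsigned coefficients c > 0 *)
  (forall a, a \in Ap ++ Am -> 0 < c a) ->
  (* 1 in Sing_{>0}(f) *)
  Sing_pos (sig_of Ap Am c) (onev R n) ->
  (* (i) *)
  (forall delta, Zset Ap Am V lam c delta -> \sum_(j < r) delta j = 1) /\
  (* (ii) *)
  (forall delta, Zset Ap Am V lam c delta -> (forall j, 0 <= delta j) ->
     (forall j, 0 < delta j ->
        let q := qsig (V j) Am (lam j) c (delta j) in
        pos_supp q = vertices (Gam (V j) Am) /\
        neg_supp q = [set b | b \in Am] /\
        ext_circuit (vertices (Gam (V j) Am)) [set b | b \in Am] /\
        Sing_pos q (onev R n)) /\
     (forall a, coef (sig_of Ap Am c) a =
        \sum_(j < r | 0 < delta j) coef (qsig (V j) Am (lam j) c (delta j)) a) /\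
     SONC (sig_of Ap Am c)).
Proof.
move=> uAp uAm disj aff hV hull bary cpos sing.
have hAV : forall j, aff_indep (V j) by move=> j; case: (hV j).
have sV : forall j, size (V j) = n.+1 by move=> j; case: (hV j) => _ [].
have VAp : forall j a, a \in V j -> a \in Ap by move=> j; case: (hV j) => _ [].
have lam0 : forall j b a, b \in Am -> a \in V j -> 0 <= lam j b a.
  by move=> j b a bA; exact: (lam_nonneg (hAV j) (hull j b bA) (bary j b bA)).
have disjV : forall j a, a \in V j -> a \notin Am by move=> j a /VAp; apply: disj.
have cpA : forall a, a \in Ap -> 0 < c a by move=> a aA; apply: cpos; rewrite mem_cat aA.
have cpM : forall b, b \in Am -> 0 < c b by move=> b bA; apply: cpos; rewrite mem_cat bA orbT.
have Tsum : \sum_(a <- Ap) c a = \sum_(b <- Am) c b.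
  have := sing.2.1; rewrite /sig_of seval_cat !seval_one_map sumrN => /eqP.
  by rewrite subr_eq0 => /eqP.
have Tpos : 0 < \sum_(b <- Am) c b.
  have : 0 < \sum_(a <- Ap ++ Am) c a.
    have : affhull [set a | a \in Ap ++ Am] 0 by rewrite aff.
    move=> [s [mu [sA [mu1 _]]]].
    case: s sA mu1 => [|a s] sA mu1; first by move: mu1; rewrite big_nil => /eqP; rewrite eq_sym oner_eq0.
    apply: sum_pos; first by move=> b /cpos /ltW.
    by exists a; [apply: sA; rewrite mem_head | apply: cpos; apply: sA; rewrite mem_head].
  rewrite big_cat /= Tsum => h; case: (ltP 0 (\sum_(b <- Am) c b)) => // hT.
  by have := lt_le_trans h (lerD hT hT); rewrite addr0 ltxx.
have part1 : forall delta, Zset Ap Am V lam c delta -> \sum_(j < r) delta j = 1.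
  move=> delta Z.
  have e : \sum_(b <- Am) c b = (\sum_(j < r) delta j) * \sum_(b <- Am) c b.
    rewrite -[LHS]Tsum big_seq.
    under eq_bigr => a aA do rewrite (Z a aA).
    under eq_bigr => a _ do rewrite big_mkcond.
    rewrite exchange_big mulr_suml; apply: eq_bigr => k _.
    rewrite -big_mkcondr -big_seq_cond -big_filter.
    have pe : perm_eq [seq a <- Ap | a \in V k] (V k).
      apply: uniq_perm; [exact: filter_uniq | exact: (hAV k).1 |].
      move=> a; rewrite mem_filter; case aV: (a \in V k) => //=.
      exact: VAp aV.
    rewrite (perm_big _ pe) /= -mulr_sumr; congr (_ * _).
    rewrite exchange_big big_seq [RHS]big_seq; apply: eq_bigr => b bA.
    by rewrite -mulr_suml (bary k b bA).1 mul1r.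
  by apply: (mulIf (lt0r_neq0 Tpos)); rewrite mul1r -e.
split; first exact: part1.
move=> delta Z d0; have s1 := part1 delta Z.
have dsum : forall F : 'I_r -> R, (forall j, delta j = 0 -> F j = 0) ->
    \sum_(j < r | 0 < delta j) F j = \sum_(j < r) F j.
  move=> F HF; rewrite big_mkcond; apply: eq_bigr => j _; case: ifP => // /negbT.
  by rewrite -leNgt => h; rewrite HF //; apply/eqP; rewrite eq_le h d0.
have coefqj : forall j x, coef (qsig (V j) Am (lam j) c (delta j)) x =
    (if x \in V j then delta j * \sum_(b <- Am) lam j b x * c b else 0 : R) +
    (if x \in Am then - (delta j * c x) else 0 : R).
  move=> k y; apply: coef_qsig; [exact: hAV | exact: sV | exact: uAm | exact: bary | exact: lam0].
have coefeq : forall x, coef (sig_of Ap Am c) x =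
    \sum_(j < r | 0 < delta j) coef (qsig (V j) Am (lam j) c (delta j)) x.
  move=> x; rewrite coef_sig //.
  under eq_bigr do rewrite coefqj.
  rewrite big_split /=; congr (_ + _).
  - rewrite dsum; last by move=> j ->; case: ifP => _ //; rewrite mul0r.
    case: (boolP (x \in Ap)) => xAp.
      by rewrite (Z x xAp) big_mkcond.
    rewrite big1 // => j _; case: ifP => // xV.
    by move: xAp; rewrite (VAp j x xV).
  - case: (boolP (x \in Am)) => xAm; last by rewrite big1.
    rewrite sumrN -mulr_suml dsum ?s1 ?mul1r // => j ->.
split.
  move=> j dj0; exact: (qfacts (hAV j) (sV j) uAm (disjV j) cpM (bary j) (lam0 j) dj0).
split; first exact: coefeq.
pose gs := flatten [seq [seq gpiece (V j) (lam j b) (delta j * c b) b | b <- Am]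
                   | j <- [seq j <- enum 'I_r | 0 < delta j]].
exists gs; split.
  move=> g /flattenP [s /mapP [j jin ->] /mapP [b bA ->]].
  move: jin; rewrite mem_filter => /andP[dj0 _].
  apply: gpiece_facts; [exact: hAV | exact: sV | | | exact: bary | by move=> a aV; apply: lam0].
  - by apply/negP => /disjV; rewrite bA.
  - by rewrite mulr_gt0 ?cpM.
move=> x; rewrite coefeq /gs big_flatten /= big_map big_filter big_enum_cond /=.
apply: eq_big => // j dj0.
rewrite coefqj [RHS]big_map [RHS]big_seq.
under [RHS]eq_bigr => b bA do rewrite (coef_gpiece _ _ _ (hAV j).1 (fun a aV => lam0 j b a bA aV)).
rewrite [RHS]big_split /= -[X in _ = X + _]big_seq -[X in _ = _ + X]big_seq; congr (_ + _).
  case: ifP => xV; last by rewrite big1.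
  by rewrite mulr_sumr; apply: eq_bigr => b _; rewrite mulrA mulrAC.
by rewrite (sum_ite (fun b => - (delta j * c b))).
Qed.
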